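(* For all planar forests $F,G$, the following are equivalent: (1) $\langle F,G\rangle\neq0$; (2) $\langle F,G\rangle=1$; (3) $m(G)\leq F$.
   Context: Let $K$ be a field. Planar rooted trees have their children linearly ordered left to right; a planar forest is a finite, possibly empty, sequence $t_1\cdots t_n$ of planar rooted trees ($1$ = empty forest). $\mathcal{H}$ is the free associative unital $K$-algebra on planar rooted trees, with basis the planar forests and product concatenation. $B^+(F)$ is the tree obtained by grafting the trees of $F$ on a new common root; $\varepsilon(F)=\delta_{F,1}$. $\Delta$ is the unique linear map with $\Delta(1)=1\otimes1$, $\Delta(xy)=(x\otimes1)\Delta(y)+\Delta(x)(1\otimes y)-x\otimes y$, $\Delta(B^+(x))=B^+(x)\otimes 1+(\mathrm{Id}\otimes B^+)\Delta(x)$. $\gamma$ is linear with $\gamma(t_1\cdots t_n)=\delta_{t_1,\bullet}t_2\cdots t_n$ ($\bullet$ the one-vertex tree), $\gamma(1)=0$. $\langle-,-\rangle$ is the unique bilinear form with $\langle1,x\rangle=\varepsilon(x)$, $\langle xy,z\rangle=\langle y\otimes x,\Delta(z)\rangle$ (with $\langle a\otimes b,c\otimes d\rangle=\langle a,c\rangle\langle b,d\rangle$), $\langle B^+(x),y\rangle=\langle x,\gamma(y)\rangle$. $m$ is the map on planar forests defined recursively by $m(1)=1$, $m(B^+(F_1)F_2)=B^+(m(F_2))m(F_1)$. Order on forests: an admissible transformation chooses a vertex $s$ which is the leftmost child of its parent $u$; if $u$ is not a root, with parent $r$, the subtree rooted at $s$ is moved to become a child of $r$ immediately to the left of $u$;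 if $u$ is a root, the subtree rooted at $s$ becomes a new tree immediately to the left of the tree of $u$; everything else unchanged. $F\leq G$ iff $G$ is obtained from $F$ by a finite (possibly empty) sequence of admissible transformations. *)

(* Defs.v *)
From mathcomp Require Import all_boot all_algebra.
From Stdlib Require Import Relations.

Set Implicit Arguments.
Unset Strict Implicit.
Unset Printing Implicit Defensive.

Import GRing.Theory.
Local Open Scope ring_scope.

(* Planar rooted trees: a root with a linearly ordered (left to right)
   sequence of subtrees.  A planar forest is a finite sequence of trees;
   the empty forest [::] is the unit 1 of H. *)
Inductive ptree : Type := Node : seq ptree -> ptree.
Definition pforest := seq ptree.

Definition Bplus (F : pforest) : ptree := Node F.
Definition pt : ptree := Node [::].

Definition eps (K : fieldType) (G : pforest) : K :=
  match G with [::] => 1 | _ => 0 end.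

(* gamma on basis forests: Some G' encodes the basis element G', None encodes 0 *)
Definition gamma (G : pforest) : option pforest :=
  match G with Node [::] :: G' => Some G' | _ => None end.

(* Coproduct of a basis forest, as a formal sum of terms c * (a (x) b),
   computed from  Delta(1) = 1(x)1,
   Delta(B^+(x)) = B^+(x)(x)1 + (Id (x) B^+) Delta(x),
   Delta(x y) = (x(x)1) Delta(y) + Delta(x) (1(x)y) - x(x)y
   (used with x = the first tree, y = the remaining forest). *)
Fixpoint deltaT (K : fieldType) (t : ptree) : seq (K * pforest * pforest) :=
  match t with
  | Node F =>
    let fix deltaF (F : pforest) : seq (K * pforest * pforest) :=
      match F with
      | [::] => [:: (1, [::], [::])]
      | t' :: F' =>
          [seq (c.1.1, t' :: c.1.2, c.2) | c <- deltaF F']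
          ++ [seq (c.1.1, c.1.2, c.2 ++ F') | c <- deltaT K t']
          ++ [:: (-1, [:: t'], F')]
      end in
    (1, [:: t], [::]) :: [seq (c.1.1, c.1.2, [:: Node c.2]) | c <- deltaF F]
  end.

Fixpoint deltaF (K : fieldType) (F : pforest) : seq (K * pforest * pforest) :=
  match F with
  | [::] => [:: (1, [::], [::])]
  | t' :: F' =>
      [seq (c.1.1, t' :: c.1.2, c.2) | c <- deltaF K F']
      ++ [seq (c.1.1, c.1.2, c.2 ++ F') | c <- deltaT K t']
      ++ [:: (-1, [:: t'], F')]
  end.

(* The pairing <F, G> on basis forests (extended bilinearly), computed from
   <1, x> = eps(x),  <x y, z> = <y (x) x, Delta(z)>,  <B^+(x), y> = <x, gamma(y)>
   (with x = the first tree, y = the remaining nonempty forest). *)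
Fixpoint pairT (K : fieldType) (t : ptree) (G : pforest) : K :=
  match t with
  | Node F =>
    let fix pairF (F : pforest) (G : pforest) : K :=
      match F with
      | [::] => eps K G
      | [:: t'] => pairT K t' G
      | t' :: F' =>
          \sum_(c <- deltaF K G) c.1.1 * pairF F' c.1.2 * pairT K t' c.2
      end in
    match gamma G with Some G' => pairF F G' | None => 0 end
  end.

Fixpoint pairing (K : fieldType) (F : pforest) (G : pforest) : K :=
  match F with
  | [::] => eps K G
  | [:: t'] => pairT K t' G
  | t' :: F' =>
      \sum_(c <- deltaF K G) c.1.1 * pairing K F' c.1.2 * pairT K t' c.2
  end.

(* The map m: m(1) = 1, m(B^+(F1) F2) = B^+(m(F2)) m(F1).
   Written as a right fold  m(t F2) = mstep t (m F2)  with
   mstep (B^+(F1)) R = B^+(R) m(F1), to satisfy the guard checker. *)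
Fixpoint mstep (t : ptree) (R : pforest) : pforest :=
  match t with
  | Node F1 =>
    let fix mF (F : pforest) : pforest :=
      match F with [::] => [::] | t' :: F' => mstep t' (mF F') end in
    Node R :: mF F1
  end.

Definition mmap (F : pforest) : pforest := foldr mstep [::] F.

Lemma mmap_nil : mmap [::] = [::].
Proof. by []. Qed.

Lemma mmap_cons (F1 F2 : pforest) :
  mmap (Node F1 :: F2) = Node (mmap F2) :: mmap F1.
Proof.
rewrite /mmap /=; congr (_ :: _); by elim: F1 => //= t F1 ->.
Qed.

(* Admissible transformations.  [adm_root]: s is the leftmost child of a
   root u; the subtree at s becomes a new tree just left of u's tree.
   [adm_deep]: the transformation takes place inside the forest of children
   of some vertex r (so the subtree at s becomes a child of r just left of u). *)
Inductive adm_step : pforest -> pforest -> Prop :=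
| adm_root (A B : pforest) (s : ptree) (C : pforest) :
    adm_step (A ++ Node (s :: C) :: B) (A ++ s :: Node C :: B)
| adm_deep (A B F F' : pforest) :
    adm_step F F' -> adm_step (A ++ Node F :: B) (A ++ Node F' :: B).

Definition forest_le (F G : pforest) : Prop := clos_refl_trans _ adm_step F G.

(* Main.v *)
Require Import Defs.
From mathcomp Require Import all_boot all_algebra.
From Stdlib Require Import Lia Relations.
From mathcomp Require Import zify.
Set Implicit Arguments.
Import GRing.Theory.
Fixpoint vszT (t : ptree) : nat := let: Node X := t in (sumn (map vszT X)).+1.
Definition vsz (G : pforest) := sumn (map vszT G).
Lemma vsz_cons X G : vsz (Node X :: G) = (vsz X).+1 + vsz G.
Proof. by []. Qed.
Fixpoint splitT (t : ptree) : nat -> pforest * pforest :=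
  let: Node X := t in
  let fix sF (X : pforest) (k : nat) : pforest * pforest :=
    match X with
    | [::] => ([::], [::])
    | t' :: X' => if k <= (vszT t').-1 then ((splitT t' k).1, Node (splitT t' k).2 :: X')
                  else (t' :: (sF X' (k - vszT t')).1, (sF X' (k - vszT t')).2)
    end in sF X.
Definition splitF (k : nat) (G : pforest) := splitT (Node G) k.
Lemma splitF_cons k X G : splitF k (Node X :: G) =
  if k <= vsz X then ((splitF k X).1, Node (splitF k X).2 :: G)
  else (Node X :: (splitF (k - (vsz X).+1) G).1, (splitF (k - (vsz X).+1) G).2).
Proof. by []. Qed.
Lemma splitF_nil k : splitF k [::] = ([::], [::]). Proof. by []. Qed.
Lemma forest_ind (P : pforest -> Prop) : P [::] ->
  (forall X G, P X -> P G -> P (Node X :: G)) -> forall G, P G.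
Proof.
move=> H0 Hc G; move: {2}(vsz G) (leqnn (vsz G)) => n; elim: n G => [|n IH] [|[X] G] //=;
  rewrite vsz_cons // => Hn; apply: Hc; apply: IH; lia.
Qed.
Arguments mmap : simpl never.
Lemma vsz_nil : vsz [::] = 0. Proof. by []. Qed.
Lemma vsz_cat A B : vsz (A ++ B) = vsz A + vsz B.
Proof. by rewrite /vsz map_cat sumn_cat. Qed.
Lemma splitF0 G : splitF 0 G = ([::], G).
Proof. elim/forest_ind: G => [|X G IHX _] //; by rewrite splitF_cons leq0n IHX. Qed.
Lemma split_size k G : vsz (splitF k G).1 = minn k (vsz G) /\ vsz (splitF k G).2 = vsz G - k.
Proof.
elim/forest_ind: G k => [|X G IHX IHG] k; first by rewrite splitF_nil /vsz /=; split; [rewrite minn0|].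
rewrite splitF_cons vsz_cons; case: ifP => Hk /=.
  by have [h1 h2] := IHX k; rewrite vsz_cons h1 h2; split; lia.
by have [h1 h2] := IHG (k - (vsz X).+1); rewrite vsz_cons h1 h2; split; lia.
Qed.
Lemma splitF_cat k A B : splitF k (A ++ B) = if k <= vsz A then ((splitF k A).1, (splitF k A).2 ++ B)
   else (A ++ (splitF (k - vsz A) B).1, (splitF (k - vsz A) B).2).
Proof.
elim: A k => [|[X] A IH] k /=.
  rewrite vsz_nil subn0; case: k => [|k]; first by rewrite splitF0.
  by case: (splitF _ B).
rewrite !splitF_cons vsz_cons IH; case: ifP => Hk.
  have -> : k <= (vsz X).+1 + vsz A by lia. by [].
case: ifP => Hk2; first have -> : k <= (vsz X).+1 + vsz A by lia.
  by [].
have -> : (k <= (vsz X).+1 + vsz A) = false by lia.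
by have -> : k - (vsz X).+1 - vsz A = k - ((vsz X).+1 + vsz A) by lia.
Qed.
Lemma vsz_mmap G : vsz (mmap G) = vsz G.
Proof.
elim/forest_ind: G => [|X G IHX IHG] //; rewrite mmap_cons !vsz_cons IHX IHG; lia.
Qed.
Lemma mmap_nil G : mmap G = [::] -> G = [::].
Proof. by case: G => // [[X] G]; rewrite mmap_cons. Qed.
Lemma mmap_split k G : mmap (splitF k G).1 = (splitF (vsz G - k) (mmap G)).2 /\
   mmap (splitF k G).2 = (splitF (vsz G - k) (mmap G)).1.
Proof.
elim/forest_ind: G k => [|X G IHX IHG] k; first by rewrite splitF_nil.
rewrite splitF_cons mmap_cons vsz_cons splitF_cons vsz_mmap; case: ifP => Hk /=.
  have [h1 h2] := IHX k.
  have -> : ((vsz X).+1 + vsz G - k <= vsz G) = false by lia.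
  by rewrite mmap_cons h1 h2 /=; have -> : (vsz X).+1 + vsz G - k - (vsz G).+1 = vsz X - k by lia.
have [h1 h2] := IHG (k - (vsz X).+1).
have -> : ((vsz X).+1 + vsz G - k <= vsz G) = true by lia.
rewrite mmap_cons h1 h2.
by have -> : (vsz X).+1 + vsz G - k = vsz G - (k - (vsz X).+1) by lia.
Qed.
Lemma deltaT_eq (K : fieldType) X : deltaT K (Node X) =
  (1%R, [:: Node X], [::]) :: [seq (c.1.1, c.1.2, [:: Node c.2]) | c <- deltaF K X].
Proof. rewrite /=; congr (_ :: _); congr map; by elim: X => //= t X ->. Qed.
Lemma deltaF_cons (K : fieldType) t G : deltaF K (t :: G) =
   [seq (c.1.1, t :: c.1.2, c.2) | c <- deltaF K G]
          ++ [seq (c.1.1, c.1.2, c.2 ++ G) | c <- deltaT K t]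
          ++ [:: (-1, [:: t], G)]%R.
Proof. by []. Qed.
Lemma pairT_eq (K : fieldType) X G : pairT K (Node X) G =
  match gamma G with Some G' => pairing K X G' | None => 0%R end.
Proof.
rewrite /=; case: (gamma G) => // G'.
elim: X G' => [|t X IH] G' //=. case: X IH => [|t2 X] IH //.
apply: eq_bigr => c _; by rewrite IH.
Qed.
Arguments splitF : simpl never.
Arguments vsz : simpl never.
Lemma delta_sum (K : fieldType) G : forall (f g : pforest -> K),
  (\sum_(c <- deltaF K G) c.1.1 * f c.1.2 * g c.2 =
   \sum_(k <- iota 0 (vsz G).+1) f (splitF k G).1 * g (splitF k G).2)%R.
Proof.
elim/forest_ind: G => [|X G IHX IHG] f g.
  by rewrite /= !big_cons !big_nil /= mul1r.
rewrite deltaF_cons deltaT_eq !big_cat [in LHS]big_cons big_seq1 !big_map.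
rewrite (IHG (fun a => f (Node X :: a)) g) (IHX f (fun b => g (Node b :: G))).
have -> : (vsz (Node X :: G)).+1 = (vsz X).+1 + (vsz G).+1 by rewrite vsz_cons; lia.
rewrite iotaD big_cat.
have -> : iota (0 + (vsz X).+1) (vsz G).+1 = map (addn (vsz X).+1) (iota 0 (vsz G).+1) by rewrite add0n -iotaDl addn0.
rewrite big_map.
rewrite (@eq_big_seq _ _ _ _ (iota 0 (vsz X).+1) _ (fun k => f (splitF k (Node X :: G)).1 * g (splitF k (Node X :: G)).2)%R); last first.
  move=> k; rewrite mem_iota => Hk; rewrite splitF_cons.
  by have -> : k <= vsz X by lia.
rewrite [X in _ = (_ + X)%R](@eq_bigr _ _ _ _ _ _ _ (fun k => f (Node X :: (splitF k G).1) * g (splitF k G).2)%R); last first.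
  move=> k _; rewrite splitF_cons.
  have -> : ((vsz X).+1 + k <= vsz X) = false by lia.
  by have -> : (vsz X).+1 + k - (vsz X).+1 = k by lia.
rewrite /= mul1r mulN1r mulNr (addrC (f _ * g G)%R) addrK.
by rewrite addrC.
Qed.

Lemma step_vsz F G : adm_step F G -> vsz G = vsz F.
Proof.
elim => [A B [S0] C|A B F0 F1 _ IH]; rewrite !vsz_cat !vsz_cons //; last by rewrite IH.
lia.
Qed.
Lemma le_vsz F G : forest_le F G -> vsz G = vsz F.
Proof. elim => [x y /step_vsz|x|x y z _ h1 _ h2] //; by rewrite h2 h1. Qed.
Lemma step_appl A F G : adm_step F G -> adm_step (A ++ F) (A ++ G).
Proof. case => [A0 B s C|A0 B F0 F1 H]; rewrite !catA; by constructor. Qed.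
Lemma step_appr B F G : adm_step F G -> adm_step (F ++ B) (G ++ B).
Proof. case => [A0 B0 s C|A0 B0 F0 F1 H]; rewrite -!catA /=; by constructor. Qed.
Lemma le_appl A F G : forest_le F G -> forest_le (A ++ F) (A ++ G).
Proof.
elim => [x y h|x|x y z _ h1 _ h2]; [apply: rt_step; exact: step_appl|exact: rt_refl|exact: rt_trans h2].
Qed.
Lemma le_appr B F G : forest_le F G -> forest_le (F ++ B) (G ++ B).
Proof.
elim => [x y h|x|x y z _ h1 _ h2]; [apply: rt_step; exact: step_appr|exact: rt_refl|exact: rt_trans h2].
Qed.
Lemma le_app A A' B B' : forest_le A A' -> forest_le B B' -> forest_le (A ++ B) (A' ++ B').
Proof. move=> h1 h2; apply: rt_trans (le_appr B h1) (le_appl A' h2). Qed.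
Lemma le_node X Y B : forest_le X Y -> forest_le (Node X :: B) (Node Y :: B).
Proof.
elim => [x y h|x|x y z _ h1 _ h2]; [apply: rt_step; exact: (adm_deep [::] B h)|exact: rt_refl|exact: rt_trans h2].
Qed.
Lemma step_ne F G : adm_step F G -> G <> [::].
Proof. by case => [A B s C|A B F0 F1 _]; case: A. Qed.
Lemma le_nil Z : forest_le Z [::] -> Z = [::].
Proof.
move=> H; have {H} H := @clos_rt_rtn1 _ _ _ _ H; inversion H => //; by have := step_ne H0.
Qed.
Lemma step_single Z Y1 : adm_step Z [:: Node Y1] -> exists Y, Z = [:: Node Y] /\ adm_step Y Y1.
Proof.
move E: [:: Node Y1] => W H; case: H E => [A B s C|A B F0 F1 H].
  move=> h; exfalso; have := congr1 size h; rewrite size_cat /= => h'; lia.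
case: A => [|a A] /=; last by move=> h; exfalso; have := congr1 size h; rewrite /= size_cat /= => h'; lia.
by case => -> <-; exists F0.
Qed.
Lemma le_single Z X : forest_le Z [:: Node X] -> exists Y, Z = [:: Node Y] /\ forest_le Y X.
Proof.
move=> H0; have {H0} := @clos_rt_rt1n _ _ _ _ H0; move E : [:: Node X] => W H; elim: H E => [x <-|x y z Hs _ IH E].
  by exists X; split => //; exact: rt_refl.
have [Y1 [Ey HY1]] := IH E; rewrite Ey in Hs.
have [Y [-> HY]] := step_single Hs.
by exists Y; split => //; apply: rt_trans HY1; apply: rt_step.
Qed.
Lemma splitF_consL k X G : k <= vsz X -> splitF k (Node X :: G) = ((splitF k X).1, Node (splitF k X).2 :: G).
Proof. by move=> h; rewrite splitF_cons h. Qed.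
Lemma splitF_consR k X G : vsz X < k -> splitF k (Node X :: G) =
  (Node X :: (splitF (k - (vsz X).+1) G).1, (splitF (k - (vsz X).+1) G).2).
Proof. by move=> h; rewrite splitF_cons leqNgt h. Qed.
Definition eqs (x y : pforest) := x = y \/ adm_step x y.
Definition eqsP (H H1 : pforest) := forall p,
  eqs (splitF p H).1 (splitF p H1).1 /\ eqs (splitF p H).2 (splitF p H1).2.
Lemma eqs_appl A x y : eqs x y -> eqs (A ++ x) (A ++ y).
Proof. by case=> [->|h]; [left|right; exact: step_appl]. Qed.
Lemma eqsP_app A X X1 : adm_step X X1 -> eqsP X X1 -> eqsP (A ++ X) (A ++ X1).
Proof.
move=> hs h p; rewrite !splitF_cat; case: ifP => _ /=.
  by split; [left|right; exact: step_appl].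
by have [h1 h2] := h (p - vsz A); split; [exact: eqs_appl|].
Qed.
Lemma split_step H H1 : adm_step H H1 -> eqsP H H1.
Proof.
elim => [A B [S0] C|A B F F' Hs IH].
  apply: eqsP_app; first exact: (adm_root [::] B (Node S0) C).
  move=> p; case: (leqP p (vsz S0)) => h1.
    rewrite splitF_consL; last by rewrite vsz_cons; lia.
    rewrite splitF_consL // splitF_consL //=.
    by split; [left|right; exact: (adm_root [::] B _ C)].
  case: (leqP p (vsz (Node S0 :: C))) => h2.
    rewrite splitF_consL // splitF_consR // splitF_consR // splitF_consL /=; last by rewrite vsz_cons in h2; lia.
    by split; left.
  rewrite splitF_consR // splitF_consR // splitF_consR /=; last by rewrite vsz_cons in h2; lia.
  have -> : p - (vsz S0).+1 - (vsz C).+1 = p - (vsz (Node S0 :: C)).+1 by rewrite vsz_cons; lia.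
  by split; [right; exact: (adm_root [::] _ _ C)|left].
have hv := step_vsz Hs.
apply: eqsP_app; first exact: (adm_deep [::] B Hs).
move=> p; case: (leqP p (vsz F)) => h1.
  rewrite splitF_consL // splitF_consL /=; last by rewrite hv.
  have [e1 e2] := IH p; split => //.
  by case: e2 => [->|e2]; [left|right; exact: (adm_deep [::] B e2)].
rewrite splitF_consR // splitF_consR /=; last by rewrite hv.
by rewrite hv; split; [right; exact: (adm_deep [::] _ Hs)|left].
Qed.
Lemma split_mono H H1 p : forest_le H H1 ->
  forest_le (splitF p H).1 (splitF p H1).1 /\ forest_le (splitF p H).2 (splitF p H1).2.
Proof.
elim => [x y h|x|x y z _ [h1 h2] _ [h3 h4]].
- have [e1 e2] := split_step h p.
  by split; [case: e1 => [->|e]; [apply: rt_refl|apply: rt_step]|case: e2 => [->|e]; [apply: rt_refl|apply: rt_step]].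
- by split; apply: rt_refl.
- by split; [apply: rt_trans h3|apply: rt_trans h4].
Qed.
Lemma fle_trans x y z : forest_le x y -> forest_le y z -> forest_le x z.
Proof. exact: rt_trans. Qed.
Lemma fle_refl x : forest_le x x. Proof. exact: rt_refl. Qed.
Lemma fle_step x y : adm_step x y -> forest_le x y. Proof. exact: rt_step. Qed.
Lemma low_nil q X : (splitF q X).1 = [::] -> (splitF q X).2 = X.
Proof.
elim/forest_ind: X q => [|Y X IHY IHX] q; first by rewrite splitF_nil.
case: (leqP q (vsz Y)) => h; last by rewrite splitF_consR.
by rewrite splitF_consL //= => /IHY ->.
Qed.
Lemma low_single p H u : (splitF p H).1 = [:: u] -> forest_le H (u :: (splitF p H).2).
Proof.
elim/forest_ind: H p => [|Y H IHY IHH] p; first by rewrite splitF_nil.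
case: (leqP p (vsz Y)) => h.
  rewrite splitF_consL //= => /IHY hY.
  apply: (fle_trans (le_node H hY)); apply: fle_step; exact: (adm_root [::] H u _).
rewrite splitF_consR //= => -[<-] /low_nil ->; exact: fle_refl.
Qed.
Lemma key X F' H : forest_le H (Node X :: F') <->
  forest_le (splitF (vsz X).+1 H).1 [:: Node X] /\ forest_le (splitF (vsz X).+1 H).2 F'.
Proof.
split.
  move/(split_mono (vsz X).+1); rewrite splitF_consR // subnn splitF0 //.
move=> [/le_single [Y [E hY]] h2].
apply: (fle_trans (@low_single _ _ _ E)).
exact: (le_app (A := [:: Node Y]) (A' := [:: Node X]) (le_node [::] hY) h2).
Qed.
Definition Rel (K : fieldType) F G :=
  (forest_le (mmap G) F /\ pairing K F G = 1%R) \/ (~ forest_le (mmap G) F /\ pairing K F G = 0%R).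
Lemma pairing_single (K : fieldType) X G : pairing K [:: Node X] G = pairT K (Node X) G.
Proof. by []. Qed.
Lemma vsz1 X : vsz [:: Node X] = (vsz X).+1.
Proof. by rewrite vsz_cons vsz_nil addn0. Qed.
Lemma main_rel (K : fieldType) n : forall F G, vsz F <= n -> Rel K F G.
Proof.
elim: n => [|n IH] F G hF.
  case: F hF => [|[X] F]; last by rewrite vsz_cons.
  move=> _; case: G => [|t G]; first by left; split => //; apply: fle_refl.
  right; split => //; move/le_nil/mmap_nil => //.
case: F hF => [|[X] F] hF.
  case: G => [|t G]; first by left; split => //; apply: fle_refl.
  right; split => //; move/le_nil/mmap_nil => //.
have IHX : forall G, Rel K X G by move=> G'; apply: IH; rewrite vsz_cons in hF; lia.
case: F hF => [|t2 F] hF.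
  rewrite /Rel pairing_single pairT_eq.
  case: G => [|[Y] G].
    right; split => //; case/le_single => Y [] //.
  rewrite mmap_cons; case: Y => [|y Y] /=.
    have -> : mmap [::] = [::] by [].
    case: (IHX G) => [[h1 h2]|[h1 h2]].
      by left; split => //; apply: le_node.
    right; split => //; case/le_single => Y' [[<-]] //.
  right; split => //; case/le_single => Y' [] [_] /mmap_nil //.
have hsz : 0 < vsz (t2 :: F) by case: t2 {hF} => Z; rewrite vsz_cons.
rewrite vsz_cons in hF.
set F' := t2 :: F.
have IHF : forall G, Rel K F' G by move=> G'; apply: IH; rewrite /F'; lia.
have IH1 : forall G, Rel K [:: Node X] G by move=> G'; apply: IH; rewrite vsz1; lia.
rewrite /Rel.
have -> : pairing K (Node X :: F') G =
   (\sum_(c <- deltaF K G) c.1.1 * pairing K F' c.1.2 * pairing K [:: Node X] c.2)%R by [].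
rewrite delta_sum.
set H := mmap G.
have vH : vsz H = vsz G by rewrite vsz_mmap.
have R2v : forall k, k <= vsz G -> forest_le (mmap (splitF k G).2) [:: Node X] -> vsz G - k = (vsz X).+1.
  move=> k hk; have [_ ->] := mmap_split k G; move/le_vsz; rewrite vsz1 => ->.
  have [-> _] := split_size (vsz G - k) H; rewrite vH; lia.
case: (leqP (vsz X).+1 (vsz G)) => hp; last first.
  right; split.
    move/le_vsz; rewrite vH vsz_cons => e; rewrite /F' in e; lia.
  apply: big1_seq => k /andP [_]; rewrite mem_iota => hk.
  case: (IH1 (splitF k G).2) => [[h1 _]|[_ ->]]; last by rewrite mulr0.
  have := R2v k _ h1; lia.
set k0 := vsz G - (vsz X).+1.
rewrite (bigD1_seq k0); [| by rewrite mem_iota; lia | exact: iota_uniq].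
rewrite big1_seq ?Monoid.mulm1; last first.
  move=> k /andP [/eqP hk]; rewrite mem_iota => hk2.
  case: (IH1 (splitF k G).2) => [[h1 _]|[_ ->]]; last by rewrite mulr0.
  have := R2v k _ h1; rewrite /k0 in hk; lia.
have [e1 e2] := mmap_split k0 G.
have hk0 : vsz G - k0 = (vsz X).+1 by rewrite /k0; lia.
rewrite hk0 -/H in e1 e2.
case: (IHF (splitF k0 G).1) => [[a1 a2]|[a1 a2]]; case: (IH1 (splitF k0 G).2) => [[b1 b2]|[b1 b2]];
  rewrite a2 b2.
- left; split; last by rewrite mulr1.
  by apply/key; rewrite -e1 -e2; split.
- right; split; last by rewrite mulr0.
  by move/key => [c1 c2]; apply: b1; rewrite e2.
- right; split; last by rewrite mul0r.
  by move/key => [c1 c2]; apply: a1; rewrite e1.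
- right; split; last by rewrite mul0r.
  by move/key => [c1 c2]; apply: a1; rewrite e1.
Qed.
Local Open Scope ring_scope.
Theorem theorem37 (K : fieldType) (F G : pforest) :
  [<-> pairing K F G != 0; pairing K F G = 1; forest_le (mmap G) F].
Proof.
have R := @main_rel K (vsz F) F G (leqnn _).
rewrite /Rel in R; tfae.
- by case: R => [[_ ->]|[_ ->]] //; rewrite eqxx.
- by case: R => [[h _] _ //|[_ ->]] /esym/eqP; rewrite oner_eq0.
- by case: R => [[_ ->]|[h _]] h'; [rewrite oner_eq0|case: (h h')].
Qed.
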